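(* Let $w$ be a weak convergence for a metric space $(X,d)$. If $\{x_n\}_{n\in\mathbb{N}}$ and $x$ in $X$ satisfy $x_n\to x$ in $d$, then every subsequence of $\{x_n\}_{n\in\mathbb{N}}$ admits a further subsequence converging in $w$ to $x$.
   Context: A convergence $c$ on a set $X$ is a rule assigning at most one point of $X$ as the ''limit'' of each sequence in $X$, such that whenever a sequence has limit $x$, every subsequence also has limit $x$; we write $x_n\to x$ in $c$. A convergence $w$ on $X$ is a weak convergence for $(X,d)$ if: (W1) whenever $\{x_n\}$ and $y$ in $X$ satisfy $\sup_n d(x_n,y)<\infty$, there are a subsequence $\{n_k\}$ and $x\in X$ with $x_{n_k}\to x$ in $w$; (W2) whenever $x_n\to x$ in $w$, $d(x,y)\le\liminf_n d(x_n,y)$ for all $y\in X$; (W3) whenever $x_n\to x$ in $w$ and $d(x_n,y)\to d(x,y)$ for some $y\in X$, then $d(x_n,x)\to0$. *)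

(* Defs.v *)
From Stdlib Require Import Reals Lra.
Open Scope R_scope.

Record is_metric {X : Type} (d : X -> X -> R) : Prop := {
  metric_nonneg : forall x y, 0 <= d x y;
  metric_eq0 : forall x y, d x y = 0 <-> x = y;
  metric_sym : forall x y, d x y = d y x;
  metric_triangle : forall x y z, d x z <= d x y + d y z
}.

Definition strictly_increasing (phi : nat -> nat) : Prop :=
  forall n m, (n < m)%nat -> (phi n < phi m)%nat.

Record is_convergence {X : Type} (c : (nat -> X) -> X -> Prop) : Prop := {
  conv_unique : forall u x y, c u x -> c u y -> x = y;
  conv_subseq : forall u x phi, strictly_increasing phi -> c u x -> c (fun k => u (phi k)) x
}.

Definition d_converges {X : Type} (d : X -> X -> R) (u : nat -> X) (x : X) : Prop :=
  Un_cv (fun n => d (u n) x) 0.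

Record is_weak_convergence {X : Type} (d : X -> X -> R) (w : (nat -> X) -> X -> Prop) : Prop := {
  wc_convergence : is_convergence w;
  wc_W1 : forall (u : nat -> X) (y : X),
      (exists M, forall n, d (u n) y <= M) ->
      exists phi x, strictly_increasing phi /\ w (fun k => u (phi k)) x;
  wc_W2 : forall u x, w u x -> forall y eps, 0 < eps ->
      exists N, forall n, (n >= N)%nat -> d x y - eps < d (u n) y;
  wc_W3 : forall u x y, w u x -> Un_cv (fun n => d (u n) y) (d x y) ->
      d_converges d u x
}.

(* Main.v *)
Require Import Defs.
From Stdlib Require Import Reals Lra Lia.
Open Scope R_scope.

Lemma si_ge (phi : nat -> nat) : strictly_increasing phi -> forall n, (n <= phi n)%nat.
Proof.
  intros H n; induction n; [lia|]. specialize (H n (S n) ltac:(lia)); lia.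
Qed.

Lemma si_comp (phi psi : nat -> nat) : strictly_increasing phi -> strictly_increasing psi ->
  strictly_increasing (fun k => phi (psi k)).
Proof. intros H1 H2 n m h; apply H1, H2, h. Qed.

Lemma fin_bound (f : nat -> R) : forall N, exists M, forall n, (n <= N)%nat -> f n <= M.
Proof.
  induction N as [|N [M HM]].
  - exists (f 0%nat); intros n h; assert (n = 0%nat) by lia; subst; lra.
  - exists (Rmax M (f (S N))); intros n h.
    destruct (Nat.eq_dec n (S N)) as [->|ne]. apply Rmax_r.
    eapply Rle_trans; [apply HM; lia| apply Rmax_l].
Qed.

Theorem lemma2p2 (X : Type) (d : X -> X -> R) (w : (nat -> X) -> X -> Prop)
  (hd : is_metric d) (hw : is_weak_convergence d w)
  (u : nat -> X) (x : X) (hux : d_converges d u x) :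
  forall phi : nat -> nat, strictly_increasing phi ->
  exists psi : nat -> nat, strictly_increasing psi /\
    w (fun k => u (phi (psi k))) x.
Proof.
  intros phi Hphi.
  assert (Hb : exists M, forall m, d (u m) x <= M).
  { destruct (hux 1 ltac:(lra)) as [N HN].
    destruct (fin_bound (fun n => d (u n) x) N) as [M HM].
    exists (Rmax M 1); intro m.
    destruct (Compare_dec.le_lt_dec m N) as [h|h].
    - eapply Rle_trans; [apply HM, h| apply Rmax_l].
    - specialize (HN m ltac:(lia)). unfold R_dist in HN.
      rewrite Rminus_0_r, Rabs_right in HN by (apply Rle_ge, metric_nonneg; auto).
      eapply Rle_trans; [|apply Rmax_r]; lra. }
  destruct Hb as [M HM].
  destruct (wc_W1 _ _ hw (fun n => u (phi n)) x) as [psi [z [Hpsi Hw]]].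
  { exists M; intro n; apply HM. }
  exists psi; split; auto.
  replace x with z; auto.
  apply (metric_eq0 _ hd).
  pose proof (metric_nonneg _ hd z x).
  destruct (Rle_lt_dec (d z x) 0) as [h|h]; [lra|exfalso].
  set (e := d z x / 2).
  destruct (wc_W2 _ _ hw _ _ Hw x e ltac:(unfold e; lra)) as [N1 HN1].
  destruct (hux e ltac:(unfold e; lra)) as [N2 HN2].
  specialize (HN1 (max N1 N2) ltac:(lia)).
  specialize (HN2 (phi (psi (max N1 N2))) ltac:(
    pose proof (si_ge _ (si_comp _ _ Hphi Hpsi) (max N1 N2)); simpl in *; lia)).
  unfold R_dist in HN2. simpl in HN1.
  rewrite Rminus_0_r, Rabs_right in HN2 by (apply Rle_ge, metric_nonneg; auto).
  unfold e in *; lra.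
Qed.
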